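(* For every $\theta,\bar\theta\in\mathbb R^m$ there exists a stochastic policy $\mu_{\theta,\bar\theta}$ such that \[ T_\alpha(\theta)-T_\alpha(\bar\theta)=A_{\mu_{\theta,\bar\theta}}(\theta-\bar\theta). \] In particular, suppose $\theta^\star$ is a projected Bellman fixed point, $\theta_{k+1}=T_\alpha(\theta_k)$, and $x_k:=\theta_k-\theta^\star$. Then $x_{k+1}=A_{\mu_k}x_k$ for all $k\ge0$, where each $\mu_k$ is a stochastic policy depending measurably on $(\theta_k,\theta^\star)$.
   Context: Consider a finite discounted MDP with state space $\mathcal S=\{1,\dots,|\mathcal S|\}$, action space $\mathcal A=\{1,\dots,|\mathcal A|\}$, transition probabilities $P(s'\mid s,a)$, expected reward $R(s,a)$, and discount factor $\gamma\in(0,1)$. State-action vectors are ordered as $(1,1),(2,1),\dots,(|\mathcal S|,1),(1,2),\dots$. The matrix $P\in\mathbb R^{|\mathcal S||\mathcal A|\times|\mathcal S|}$ has rows $P(\cdot\mid s,a)$, and $R$ has entries $R(s,a)$. A stochastic policy is a map $\mu:\mathcal S\to\Delta_{|\mathcal A|}$, where $\Delta_{|\mathcal A|}$ is the probability simplex. The matrix $\Pi^\mu\in\mathbb R^{|\mathcal S|\times|\mathcal S||\mathcal A|}$ has entry $\mu(a\mid s)$ in row $s$, column $(s,a)$, and zeros elsewhere. The feature matrix $\Phi\in\mathbb R^{|\mathcal S||\mathcal A|\times m}$ has full column rank and rows $\phi(s,a)^\top$. Define $V_\theta(s):=\max_a\phi(s,a)^\top\theta$. The distribution $d$ on $\mathcal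 S\times\mathcal A$ satisfies $d>0$ everywhere, and $D=\mathrm{diag}(d)$. The step size is $\alpha\in(0,1)$. Define $g(\theta):=\Phi^\top D(R+\gamma PV_\theta-\Phi\theta)$ and $T_\alpha(\theta):=\theta+\alpha g(\theta)$. A projected Bellman fixed point is a $\theta^\star$ with $g(\theta^\star)=0$. For a stochastic policy $\mu$, define $A_\mu:=I-\alpha\Phi^\top D\Phi+\alpha\gamma\Phi^\top DP\Pi^\mu\Phi$. *)

(* Defs.v *)
From HB Require Import structures.
From mathcomp Require Import all_boot all_order all_algebra.
From mathcomp Require Import all_classical all_reals all_analysis.
Set Implicit Arguments. Unset Strict Implicit. Unset Printing Implicit Defensive.
Import Order.TTheory GRing.Theory Num.Theory.
Import numFieldNormedType.Exports.
Local Open Scope classical_set_scope.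
Local Open Scope ring_scope.

(* State-action pairs are indexed by 'I_(nA * nS) with
   (s,a) |-> a * nS + s  (= mxvec_index a s), i.e. the ordering
   (1,1),(2,1),...,(|S|,1),(1,2),... of the paper. *)
Definition sa_idx (nS nA : nat) (s : 'I_nS) (a : 'I_nA) : 'I_(nA * nS) :=
  mxvec_index a s.

Section MDP.
Variables (R : realType) (nS nA m : nat).

Definition row_stochastic (k l : nat) (M : 'M[R]_(k, l)) : Prop :=
  (forall i j, 0 <= M i j) /\ (forall i, \sum_j M i j = 1).

(* stochastic policy mu : S -> Delta_{|A|}, stored as mu s a = mu(a|s) *)
Definition is_policy (mu : 'M[R]_(nS, nA)) : Prop := row_stochastic mu.

(* Pi^mu : |S| x |S||A|, entry mu(a|s) at row s, column (s,a), 0 elsewhere *)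
Definition Pi_mat (mu : 'M[R]_(nS, nA)) : 'M[R]_(nS, nA * nS) :=
  \matrix_(s, j) \sum_(a < nA) (j == sa_idx s a)%:R * mu s a.

(* maximum of a finite family (the head default is only used when nA = 0) *)
Definition fmax (f : 'I_nA -> R) : R :=
  \big[Num.max/head 0 (map f (enum 'I_nA))]_(a < nA) f a.

Definition Vtheta (Phi : 'M[R]_(nA * nS, m)) (theta : 'cV[R]_m) : 'cV[R]_nS :=
  \col_s fmax (fun a => (Phi *m theta) (sa_idx s a) 0).

Definition Dmat (d : 'cV[R]_(nA * nS)) : 'M[R]_(nA * nS) := diag_mx d^T.

Definition gfun (P : 'M[R]_(nA * nS, nS)) (Rw : 'cV[R]_(nA * nS)) (gamma : R)
  (Phi : 'M[R]_(nA * nS, m)) (d : 'cV[R]_(nA * nS)) (theta : 'cV[R]_m) : 'cV[R]_m :=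
  Phi^T *m Dmat d *m (Rw + gamma *: (P *m Vtheta Phi theta) - Phi *m theta).

Definition Talpha (P : 'M[R]_(nA * nS, nS)) (Rw : 'cV[R]_(nA * nS)) (gamma : R)
  (Phi : 'M[R]_(nA * nS, m)) (d : 'cV[R]_(nA * nS)) (alpha : R)
  (theta : 'cV[R]_m) : 'cV[R]_m :=
  theta + alpha *: gfun P Rw gamma Phi d theta.

Definition Amu (P : 'M[R]_(nA * nS, nS)) (gamma : R)
  (Phi : 'M[R]_(nA * nS, m)) (d : 'cV[R]_(nA * nS)) (alpha : R)
  (mu : 'M[R]_(nS, nA)) : 'M[R]_m :=
  1%:M - alpha *: (Phi^T *m Dmat d *m Phi)
       + (alpha * gamma) *: (Phi^T *m Dmat d *m P *m Pi_mat mu *m Phi).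

End MDP.

Definition borel_meas (R : realType) (T : topologicalType) (f : T -> R) : Prop :=
  forall U : set R, open U -> <<s [set A : set T | open A] >> (f @^-1` U).

(* Main.v *)
Require Import Defs.
From HB Require Import structures.
From mathcomp Require Import all_boot all_order all_algebra.
From mathcomp Require Import all_classical all_reals all_analysis.
From mathcomp Require Import ring lra.
Import Order.TTheory GRing.Theory Num.Theory.
Set Implicit Arguments. Unset Strict Implicit. Unset Printing Implicit Defensive.
Import numFieldNormedType.Exports.
Local Open Scope classical_set_scope.
Local Open Scope ring_scope.
Section Argmax.
Variables (R : realType) (nA : nat) (a0 : 'I_nA).

Lemma fmax_ge (f : 'I_nA -> R) c : f c <= fmax f.
Proof. exact: le_bigmax. Qed.

Lemma fmax_ex (f : 'I_nA -> R) : exists c, fmax f = f c.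
Proof.
rewrite /fmax.
apply: (big_ind (fun v => exists c, v = f c)).
- case E: (enum 'I_nA) => [|c s] /=; last by exists c.
  by have := mem_enum 'I_nA a0; rewrite E.
- move=> x y [c ->] [c' ->].
  by rewrite /Order.max; case: ifP => _; [exists c'|exists c].
- by move=> i _; exists i.
Qed.

Definition amx (f : 'I_nA -> R) : 'I_nA :=
  odflt a0 [pick a | (f a == fmax f) && [forall j : 'I_nA, (j < a)%N ==> (f j != fmax f)]].

Definition aspec (f : 'I_nA -> R) (a : 'I_nA) :=
  (forall c, f c <= f a) /\ (forall j : 'I_nA, (j < a)%N -> f j < f a).

Lemma aspec_amx f : aspec f (amx f).
Proof.
rewrite /amx; case: pickP => [a /andP[/eqP Ha /forallP Hj]|H] /=.
  split=> [c|j hj]; first by rewrite Ha fmax_ge.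
  by have := Hj j; rewrite hj /= Ha lt_neqAle fmax_ge andbT.
exfalso.
have key : forall n (a : 'I_nA), (a <= n)%N -> f a = fmax f -> False.
  elim=> [|n IH] a ha Ha; have := H a; rewrite Ha eqxx /= => /forallPn [j];
    rewrite negb_imply negbK => /andP[hj /eqP Hj].
    by move: (leq_trans hj ha).
  by apply: (IH j _ Hj); rewrite -ltnS (leq_trans hj ha).
by case: (fmax_ex f) => c Hc; exact: (key c c (leqnn _) (esym Hc)).
Qed.

Lemma aspec_uniq f a b : aspec f a -> aspec f b -> a = b.
Proof.
move=> [Ha1 Ha2] [Hb1 Hb2]; case: (ltngtP a b) => h.
- by have := Hb2 _ h; rewrite ltNge Ha1.
- by have := Ha2 _ h; rewrite ltNge Hb1.
- exact: val_inj.
Qed.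

Lemma amxP f a : amx f = a <-> aspec f a.
Proof.
split=> [<-|Ha]; first exact: aspec_amx.
exact: aspec_uniq (aspec_amx f) Ha.
Qed.

Lemma fmax_amx f : fmax f = f (amx f).
Proof.
case: (aspec_amx f) => H1 _; apply/eqP; rewrite eq_le fmax_ge andbT.
by case: (fmax_ex f) => c ->; exact: H1.
Qed.

End Argmax.
Section Model.
Variables (R : realType) (nS nA m : nat) (a0 : 'I_nA) (Phi : 'M[R]_(nA * nS, m)).

Definition xv (c : 'cV[R]_m) (s : 'I_nS) (a : 'I_nA) : R := (Phi *m c) (sa_idx s a) 0.
Definition numf a b (z : 'cV[R]_m * 'cV[R]_m) s := xv z.1 s a - xv z.1 s b.
Definition denf a b (z : 'cV[R]_m * 'cV[R]_m) s :=
  xv z.1 s a - xv z.2 s a - (xv z.1 s b - xv z.2 s b).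
Definition lam a b z s := numf a b z s / denf a b z s.
Definition coef a b z s (a' : 'I_nA) : R :=
  (a' == a)%:R * lam a b z s + (a' == b)%:R * (1 - lam a b z s).
Definition pol (z : 'cV[R]_m * 'cV[R]_m) : 'M[R]_(nS, nA) :=
  \matrix_(s, a') coef (amx a0 (xv z.1 s)) (amx a0 (xv z.2 s)) z s a'.

Lemma sum_delta (F : 'I_nA -> R) a : \sum_i (i == a)%:R * F i = F a.
Proof.
rewrite (bigD1 a) //= eqxx mul1r big1 ?addr0 // => i /negbTE ->.
by rewrite mul0r.
Qed.

Lemma sum_delta2 (F : 'I_nA -> R) c a : \sum_i ((i == a)%:R * c) * F i = c * F a.
Proof.
rewrite (bigD1 a) //= eqxx mul1r big1 ?addr0 // => i /negbTE ->.
by rewrite mul0r mul0r.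
Qed.

Lemma wdiff th tb s a : (Phi *m (th - tb)) (sa_idx s a) 0 = xv th s a - xv tb s a.
Proof. by rewrite /xv mulmxBr !mxE. Qed.

Lemma lam_bounds a b z s : aspec (xv z.1 s) a -> aspec (xv z.2 s) b ->
  (0 <= lam a b z s <= 1) /\ (denf a b z s = 0 -> numf a b z s = 0).
Proof.
move=> [Ha _] [Hb _].
have hn : 0 <= numf a b z s by rewrite /numf subr_ge0.
have hd : numf a b z s <= denf a b z s.
  by have := Hb a; move: hn; rewrite /numf /denf => hn hb; lra.
split; last first.
  by move=> h0; apply/eqP; rewrite eq_le hn andbT -h0.
case: (eqVneq (denf a b z s) 0) => [h0|hd0].
  by rewrite /lam h0 invr0 mulr0 lexx ler01.
have dpos : 0 < denf a b z s by rewrite lt_neqAle eq_sym hd0 (le_trans hn hd).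
by rewrite /lam divr_ge0 ?(ltW dpos) //= ler_pdivrMr // mul1r.
Qed.

Lemma pol_policy z : is_policy (pol z).
Proof.
split.
  move=> s a'; rewrite mxE /coef.
  have [/andP[l0 l1] _] := lam_bounds (aspec_amx a0 (xv z.1 s)) (aspec_amx a0 (xv z.2 s)).
  by rewrite addr_ge0 // mulr_ge0 ?ler0n // subr_ge0.
move=> s; under eq_bigr do rewrite mxE /coef.
rewrite big_split /= -!big_distrl /=.
have h1 : forall a, \sum_(i < nA) ((i == a)%:R : R) = 1.
  move=> a; rewrite (bigD1 a) //= eqxx big1 ?addr0 // => i /negbTE ->.
  by [].
by rewrite !h1 !mul1r addrC subrK.
Qed.

Lemma Pi_apply (mu : 'M[R]_(nS, nA)) (v : 'cV[R]_(nA * nS)) s :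
  (Pi_mat mu *m v) s 0 = \sum_a mu s a * v (sa_idx s a) 0.
Proof.
rewrite mxE; under eq_bigr do rewrite mxE big_distrl /=.
rewrite exchange_big /=; apply: eq_bigr => a _.
rewrite (bigD1 (sa_idx s a)) //= eqxx mul1r big1 ?addr0 //.
by move=> k /negbTE ->; rewrite mul0r mul0r.
Qed.

Lemma V_diff th tb :
  Vtheta Phi th - Vtheta Phi tb = Pi_mat (pol (th, tb)) *m (Phi *m (th - tb)).
Proof.
apply/matrixP => s j; rewrite ord1 Pi_apply !mxE.
under eq_bigr do rewrite wdiff mxE /coef mulrDl.
rewrite big_split /= !sum_delta2 /=.
set a := amx a0 (xv th s); set b := amx a0 (xv tb s).
have -> : fmax (fun a1 => (Phi *m th) (sa_idx s a1) 0) = xv th s a.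
  exact: (fmax_amx a0 (xv th s)).
have -> : fmax (fun a1 => (Phi *m tb) (sa_idx s a1) 0) = xv tb s b.
  exact: (fmax_amx a0 (xv tb s)).
have [_ h0] := @lam_bounds a b (th, tb) s (aspec_amx a0 (xv th s)) (aspec_amx a0 (xv tb s)).
rewrite -/(xv th s a) -/(xv tb s a) -/(xv th s b) -/(xv tb s b).
case: (eqVneq (denf a b (th, tb) s) 0) => [hd|hd].
  have hn := h0 hd; rewrite /lam hd invr0 mulr0.
  move: hn; rewrite /numf /= => hn; lra.
have hl : lam a b (th, tb) s * denf a b (th, tb) s = numf a b (th, tb) s.
  by rewrite /lam divfK.
move: hl; rewrite /denf /numf /=; set l := lam _ _ _ _ => hl.
have E : l * (xv th s a - xv tb s a) + (1 - l) * (xv th s b - xv tb s b)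
   = (xv th s b - xv tb s b) + l * (xv th s a - xv tb s a - (xv th s b - xv tb s b)).
  by ring.
by rewrite E hl; ring.
Qed.

End Model.
Lemma T_diff (R : realType) (nS nA m : nat) (a0 : 'I_nA)
  (P : 'M[R]_(nA * nS, nS)) (Rw : 'cV[R]_(nA * nS)) (gamma : R)
  (Phi : 'M[R]_(nA * nS, m)) (d : 'cV[R]_(nA * nS)) (alpha : R) th tb :
  Talpha P Rw gamma Phi d alpha th - Talpha P Rw gamma Phi d alpha tb
  = Amu P gamma Phi d alpha (pol a0 Phi (th, tb)) *m (th - tb).
Proof.
have HV := V_diff a0 Phi th tb.
rewrite /Talpha /gfun /Amu.
have -> : Vtheta Phi th = Vtheta Phi tb + Pi_mat (pol a0 Phi (th, tb)) *m (Phi *m (th - tb)).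
  by rewrite -HV addrC subrK.
set Pi := Pi_mat _. set V := Vtheta Phi tb. set D := Dmat d.
do 3! rewrite ?(mulmxDr, mulmxBr, mulmxDl, mulmxBl, mulmxN, mulNmx, mul1mx, mulmxA)
  -?(scalemxAl, scalemxAr) ?scalerA.
apply/matrixP => i j; rewrite !mxE.
ring.
Qed.
Section Borel.
Variables (R : realType) (T : topologicalType).
Let G := [set A : set T | open A].
Definition bm (A : set T) := <<s G >> A.

Lemma bm_open A : open A -> bm A.
Proof. by move=> h; apply: sub_gen_smallest. Qed.

Lemma bm_C A : bm A -> bm (~` A).
Proof. by move=> h; rewrite -setTD; exact: sigma_algebraCD. Qed.

Lemma bm_U A B : bm A -> bm B -> bm (A `|` B).
Proof.
move=> hA hB.
have -> : A `|` B = \bigcup_i (if i is 0%N then A else B).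
  apply/seteqP; split=> z.
    by case=> h; [exists 0%N | exists 1%N].
  by move=> [[|i] _ h]; [left | right].
by apply: sigma_algebra_bigcup => -[|i].
Qed.

Lemma bm_I A B : bm A -> bm B -> bm (A `&` B).
Proof.
move=> hA hB; rewrite -(setCK (A `&` B)) setCI.
by apply: bm_C; apply: bm_U; apply: bm_C.
Qed.

Lemma bm_T : bm setT.
Proof. by rewrite -setC0; apply: bm_C; exact: sigma_algebra0. Qed.

Lemma bm_all (I : finType) (A : I -> set T) :
  (forall i, bm (A i)) -> bm [set z | forall i, A i z].
Proof.
move=> h; have -> : [set z | forall i, A i z] = \big[setI/setT]_(i <- enum I) A i.
  have H : forall s : seq I,
      [set z | forall i, i \in s -> A i z] = \big[setI/setT]_(i <- s) A i.
    elim=> [|i s IH]; first by rewrite big_nil; apply/seteqP; split=> z //=.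
    rewrite big_cons -IH; apply/seteqP; split=> z /=.
      move=> Hz; split; first by apply: Hz; rewrite inE eqxx.
      by move=> j hj; apply: Hz; rewrite inE hj orbT.
    by move=> [Hi Hs] j; rewrite inE => /orP[/eqP->|/Hs].
  rewrite -H; apply/seteqP; split=> z /= Hz j; first by move=> _; apply: Hz.
  by apply: Hz; rewrite mem_enum.
by apply: big_ind => //; [exact: bm_T | exact: bm_I].
Qed.

Lemma bm_ex (I : finType) (A : I -> set T) :
  (forall i, bm (A i)) -> bm [set z | exists i, A i z].
Proof.
move=> h; have -> : [set z | exists i, A i z] = ~` [set z | forall i, (~` A i) z].
  apply/seteqP; split=> z /=; first by move=> [i Hi] H; apply: (H i).
  move=> H; apply: contrapT => H2; apply: H => i Hi; apply: H2; exists i.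
  exact: Hi.
by apply: bm_C; apply: bm_all => i; exact: bm_C.
Qed.

Lemma bm_piece (f g : T -> R) (E O : set T) (U : set R) :
  bm E -> open O -> {in O, continuous g} -> E `<=` O ->
  (forall z, E z -> f z = g z) -> open U -> bm (E `&` f @^-1` U).
Proof.
move=> hE hO hg hEO hfg hU.
have -> : E `&` f @^-1` U = E `&` (O `&` g @^-1` U).
  apply/seteqP; split=> z /= [Ez Hz]; split => //.
    by split; [exact: hEO | rewrite /preimage /= -hfg].
  by move: Hz => [_]; rewrite /preimage /= hfg.
apply: bm_I => //; apply: bm_open; exact: ((continuous_inP g hO).1 hg U hU).
Qed.

Lemma open_ltf (h1 h2 : T -> R) : continuous h1 -> continuous h2 ->
  open [set z | h1 z < h2 z].
Proof.
move=> c1 c2.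
have c : continuous (fun z => h2 z - h1 z) by move=> z; exact: cvgB (c2 z) (c1 z).
have -> : [set z | h1 z < h2 z] = (fun z => h2 z - h1 z) @^-1` [set x | 0 < x].
  by apply/seteqP; split=> z /=; rewrite subr_gt0.
exact: ((continuousP _).1 c _ (@open_gt R 0)).
Qed.

Lemma open_neqf (h : T -> R) : continuous h -> open [set z | h z != 0].
Proof.
move=> c.
have -> : [set z | h z != 0] = h @^-1` [set x | x != 0] by [].
exact: ((continuousP _).1 c _ (@open_neq R 0)).
Qed.

Lemma cvg_sum' (I : Type) (r : seq I) (F : I -> T -> R) z :
  (forall i, F i x @[x --> z] --> F i z) ->
  (\sum_(i <- r) F i x) @[x --> z] --> \sum_(i <- r) F i z.
Proof.
move=> h; elim: r => [|i r IH].
  rewrite big_nil; under eq_fun do rewrite big_nil; exact: cvg_cst.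
rewrite big_cons; under eq_fun do rewrite big_cons.
exact: cvgD (h i) IH.
Qed.

Lemma bm_aspec (nA : nat) (h : 'I_nA -> T -> R) (hc : forall c, continuous (h c)) a :
  bm [set z | aspec (fun c => h c z) a].
Proof.
have -> : [set z | aspec (fun c => h c z) a] =
   [set z | forall c, h c z <= h a z] `&` [set z | forall j : 'I_nA, (j < a)%N -> h j z < h a z].
  by apply/seteqP; split=> z /=.
apply: bm_I.
  apply: bm_all => c; change (bm [set z | h c z <= h a z]).
  have -> : [set z | h c z <= h a z] = ~` [set z | h a z < h c z].
    by apply/seteqP; split=> z /=; rewrite leNgt => /negP.
  by apply: bm_C; apply: bm_open; apply: open_ltf.
apply: bm_all => j; change (bm [set z | (j < a)%N -> h j z < h a z]); apply: bm_open.
have -> : [set z | (j < a)%N -> h j z < h a z] =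
    if (j < a)%N then [set z | h j z < h a z] else setT.
  by case: (j < a)%N; apply/seteqP; split=> z /=; auto.
by case: ifP => _; [exact: open_ltf | exact: openT].
Qed.

End Borel.
Lemma entry_cont (R : realType) m n (i : 'I_m) (j : 'I_n) :
  continuous (fun M : 'M[R]_(m, n) => M i j).
Proof.
move=> M A /= HA.
exists (fun i' j' => if (i' == i) && (j' == j) then A else setT).
  move=> i' j'; case: (boolP ((i' == i) && (j' == j))) => [/andP[/eqP-> /eqP->] //|_].
  exact: filterT.
by move=> M' /(_ i j); rewrite !eqxx.
Qed.

Section Meas.
Variables (R : realType) (nS nA m : nat) (a0 : 'I_nA) (Phi : 'M[R]_(nA * nS, m)).
Local Notation T := ('cV[R]_m * 'cV[R]_m)%type.

Lemma cont_e1 i : continuous (fun z : T => z.1 i 0).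
Proof.
move=> z; apply: (@continuous_comp _ _ _ fst (fun M : 'cV[R]_m => M i 0)).
  by case: z => x y; exact: cvg_fst.
exact: entry_cont.
Qed.

Lemma cont_e2 i : continuous (fun z : T => z.2 i 0).
Proof.
move=> z; apply: (@continuous_comp _ _ _ snd (fun M : 'cV[R]_m => M i 0)).
  by case: z => x y; exact: cvg_snd.
exact: entry_cont.
Qed.

Lemma cont_xv1 s a : continuous (fun z : T => xv Phi z.1 s a).
Proof.
have -> : (fun z : T => xv Phi z.1 s a) =
    fun z => \sum_j Phi (sa_idx s a) j * z.1 j 0.
  by apply/funext => z; rewrite /xv mxE.
move=> z; have := @cvg_sum' R _ _ (index_enum 'I_m) (fun j (x : T) => Phi (sa_idx s a) j * x.1 j 0) z.
apply => j.
apply: cvgM; [exact: cvg_cst | exact: cont_e1].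
Qed.

Lemma cont_xv2 s a : continuous (fun z : T => xv Phi z.2 s a).
Proof.
have -> : (fun z : T => xv Phi z.2 s a) =
    fun z => \sum_j Phi (sa_idx s a) j * z.2 j 0.
  by apply/funext => z; rewrite /xv mxE.
move=> z; have := @cvg_sum' R _ _ (index_enum 'I_m) (fun j (x : T) => Phi (sa_idx s a) j * x.2 j 0) z.
apply => j.
apply: cvgM; [exact: cvg_cst | exact: cont_e2].
Qed.

Lemma cont_num a b s : continuous (fun z : T => numf Phi a b z s).
Proof. by move=> z; apply: cvgB; [exact: cont_xv1 | exact: cont_xv1]. Qed.

Lemma cont_den a b s : continuous (fun z : T => denf Phi a b z s).
Proof.
move=> z; apply: cvgB; (apply: cvgB; [exact: cont_xv1 | exact: cont_xv2]).
Qed.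

Lemma pol_meas s a' : borel_meas (fun z : T => pol a0 Phi z s a').
Proof.
move=> U hU.
set f := fun z : T => _.
pose E (k : 'I_nA * 'I_nA * bool) : set T :=
  [set z | amx a0 (xv Phi z.1 s) = k.1.1 /\ amx a0 (xv Phi z.2 s) = k.1.2 /\
           (denf Phi k.1.1 k.1.2 z s == 0) = k.2].
have -> : f @^-1` U = [set z | exists k, (E k `&` f @^-1` U) z].
  apply/seteqP; split=> z /=; last by move=> [k [_ h]].
  move=> hz; exists (amx a0 (xv Phi z.1 s), amx a0 (xv Phi z.2 s),
     denf Phi (amx a0 (xv Phi z.1 s)) (amx a0 (xv Phi z.2 s)) z s == 0).
  by split.
apply: (bm_ex (A := fun k => E k `&` f @^-1` U)) => -[[a b] t].
have hE : bm (E (a, b, t)).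
  have -> : E (a, b, t) = [set z | aspec (fun c => xv Phi z.1 s c) a] `&`
      ([set z | aspec (fun c => xv Phi z.2 s c) b] `&`
       [set z | (denf Phi a b z s == 0) = t]).
    apply/seteqP; split=> z /=.
      by move=> [/amxP h1 [/amxP h2 h3]].
    by move=> [/amxP h1 [/amxP h2 h3]].
  apply: bm_I; first exact: (@bm_aspec R _ nA (fun c (z:T) => xv Phi z.1 s c) (fun c => cont_xv1 (s:=s) (a:=c)) a).
  apply: bm_I; first exact: (@bm_aspec R _ nA (fun c (z:T) => xv Phi z.2 s c) (fun c => cont_xv2 (s:=s) (a:=c)) b).
  case: t.
    have -> : [set z : T | (denf Phi a b z s == 0) = true] =
        ~` [set z | denf Phi a b z s != 0].
      by apply/seteqP; split=> z /=; case: (_ == 0).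
    by apply: bm_C; apply: bm_open; apply: open_neqf; exact: cont_den.
  have -> : [set z : T | (denf Phi a b z s == 0) = false] =
      [set z | denf Phi a b z s != 0].
    by apply/seteqP; split=> z /=; case: (_ == 0).
  by apply: bm_open; apply: open_neqf; exact: cont_den.
case: t in hE *.
  apply: (@bm_piece _ _ f (fun _ => (a' == b)%:R) _ setT) => //.
  - exact: openT.
  - by move=> z _; exact: cvg_cst.
  - move=> z [h1 [h2 h3]]; rewrite /f mxE h1 h2 /coef /lam.
    by rewrite (eqP h3) invr0 !mulr0 add0r subr0 mulr1.
apply: (@bm_piece _ _ f (fun z => coef Phi a b z s a') _
          [set z | denf Phi a b z s != 0]) => //.
- by apply: open_neqf; exact: cont_den.
- move=> z; rewrite inE /= => hz.
  have cl : (fun x : T => lam Phi a b x s) @ z --> lam Phi a b z s.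
    exact: cvgM (@cont_num a b s z) (cvgV hz (@cont_den a b s z)).
  apply: cvgD; (apply: cvgM; first exact: cvg_cst).
    exact: cl.
  by apply: cvgB; [exact: cvg_cst | exact: cl].
- by move=> z [_ [_ h3]]; rewrite /= h3.
- by move=> z [h1 [h2 h3]]; rewrite /f mxE h1 h2.
Qed.

End Meas.
Theorem proposition1
  (R : realType) (nS nA m : nat)
  (P : 'M[R]_(nA * nS, nS)) (Rw : 'cV[R]_(nA * nS)) (gamma : R)
  (Phi : 'M[R]_(nA * nS, m)) (d : 'cV[R]_(nA * nS)) (alpha : R) :
  (0 < nA)%N ->
  row_stochastic P ->
  0 < gamma < 1 ->
  \rank Phi = m ->
  (forall i, 0 < d i 0) ->
  0 < alpha < 1 ->
  (* part 1 *)
  (forall theta thetabar : 'cV[R]_m,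
     exists mu : 'M[R]_(nS, nA),
       is_policy mu /\
       Talpha P Rw gamma Phi d alpha theta - Talpha P Rw gamma Phi d alpha thetabar
       = Amu P gamma Phi d alpha mu *m (theta - thetabar))
  /\
  (* part 2: the iteration, with policies chosen measurably in (theta_k, theta_star) *)
  (exists pol : 'cV[R]_m * 'cV[R]_m -> 'M[R]_(nS, nA),
     (forall z, is_policy (pol z)) /\
     (forall (s : 'I_nS) (a : 'I_nA), borel_meas (fun z => pol z s a)) /\
     forall (thetastar : 'cV[R]_m),
       gfun P Rw gamma Phi d thetastar = 0 ->
       forall theta : nat -> 'cV[R]_m,
         (forall k, theta k.+1 = Talpha P Rw gamma Phi d alpha (theta k)) ->
         forall k,
           theta k.+1 - thetastar
           = Amu P gamma Phi d alpha (pol (theta k, thetastar)) *m (theta k - thetastar)).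
Proof.
move=> hnA _ _ _ _ _.
pose a0 : 'I_nA := Ordinal hnA.
split.
  move=> th tb; exists (pol a0 Phi (th, tb)); split; first exact: pol_policy.
  exact: T_diff.
exists (pol a0 Phi); split; first exact: pol_policy.
split; first by move=> s a; exact: pol_meas.
move=> ts hg th hth k; rewrite hth.
rewrite -{1}(_ : Talpha P Rw gamma Phi d alpha ts = ts); last first.
  by rewrite /Talpha hg scaler0 addr0.
exact: T_diff.
Qed.
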